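(* Consider the clock protocol (defined in the context) run by a population of $n$ agents with a fixed constant drip probability $p\in(0,1]$. Fix a minute index $i\ge 0$. With very high probability, for all times $t$ of the execution: if $n^{-0.45}\le c_{\ge i}(t)\le 0.1$, then $$c_{\ge i+1}(t)\le 0.9\,p\,c_{\ge i}(t)^2+d_{\ge i+1}(t).$$
   Context: Clock protocol: $n$ agents, each with an integer field $\mathtt{minute}$, initially $0$. At each step an ordered pair of distinct agents is chosen uniformly at random to interact; parallel time $t$ corresponds to $tn$ interactions. Transitions: (drip) if both agents have $\mathtt{minute}=i$, then with probability $p$ one of them moves to $\mathtt{minute}=i+1$ (i.e. $i,i\to i,i+1$); (epidemic) if the agents have minutes $j>k$, the agent with minute $k$ sets its minute to $j$ (i.e. $j,k\to j,j$). For a minute $i$ and time $t$, $c_{\ge i}(t)$ is the fraction of agents with $\mathtt{minute}\ge i$ at time $t$. The set of early drip agents $D_{\ge i+1}(t)$ consists of the agents that, at some time $\le t$, moved above minute $i$ via a drip reaction occurring at a time $s$ with $c_{\ge i}(s)<n^{-0.45}$, together with agents that were brought above minute $i$ (at a time $\le t$) via an epidemic reaction with another early drip agent; $d_{\ge i+1}(t)=|D_{\ge i+1}(t)|/n$. ''With very high probability'' means with probability $1-n^{-\omega(1)}$ as $n\to\infty$ ($p$ fixed); the execution is considered over polynomially many (in $n$) minutes. *)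

(* Defs.v *)
From HB Require Import structures.
From mathcomp Require Import all_boot all_order all_algebra.
From mathcomp Require Import reals.
From mathcomp Require exp.
Set Implicit Arguments. Unset Strict Implicit. Unset Printing Implicit Defensive.
Import Order.TTheory GRing.Theory Num.Theory.
Local Open Scope ring_scope.

(** A configuration maps each
    agent to its minute. One interaction is described by a triple
    ((a, b), coin): the ordered pair (initiator a, responder b) and the
    Bernoulli(p) coin used by the drip reaction. *)
Definition config (n : nat) := 'I_n -> nat.
Definition interaction (n : nat) := ('I_n * 'I_n * bool)%type.

Definition init_config (n : nat) : config n := fun _ => 0%N.

(** One transition.  drip: i,i -> i,i+1 (the responder moves, if coin);
    epidemic: j,k -> j,j for j > k. *)
Definition clock_step (n : nat) (st : config n) (x : interaction n) : config n :=
  let: (a, b, coin) := x in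
  if st a == st b then
    (if coin then fun y => if y == b then (st b).+1 else st y else st)
  else if (st b < st a)%N then fun y => if y == b then st a else st y
  else fun y => if y == a then st b else st y.

Definition c_ge (R : realType) (n : nat) (i : nat) (st : config n) : R :=
  #|[pred y | (i <= st y)%N]|%:R / n%:R.

Definition thr (R : realType) (n : nat) : R := exp.powR (n%:R) (- (45%:R / 100%:R)).

(** Update of the set D_{>= i+1} of early drip agents along one interaction
    (x applied to configuration st, the state just before the interaction):
    - a drip moving the responder from minute i to i+1 while c_{>=i} < n^{-0.45};
    - an epidemic bringing an agent from minute <= i to above i, where the
      other (higher) agent is already an early drip agent. *)
Definition early_step (R : realType) (n : nat) (i : nat) (st : config n)
    (D : {set 'I_n}) (x : interaction n) : {set 'I_n} :=
  let: (a, b, coin) := x in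
  if st a == st b then
    (if [&& coin, st b == i & c_ge R i st < thr R n] then b |: D else D)
  else if (st b < st a)%N then
    (if [&& (st b <= i)%N, (i < st a)%N & a \in D] then b |: D else D)
  else
    (if [&& (st a <= i)%N, (i < st b)%N & b \in D] then a |: D else D).

Definition run (R : realType) (n : nat) (i : nat) (s : seq (interaction n))
    : config n * {set 'I_n} :=
  foldl (fun cd x => (clock_step cd.1 x, early_step R i cd.1 cd.2 x))
        (@init_config n, set0) s.

Definition iweight (R : realType) (n : nat) (p : R) (x : interaction n) : R :=
  let: (a, b, coin) := x in
  if a != b then (n%:R * (n%:R - 1))^-1 * (if coin then p else 1 - p) else 0.

Definition Prob (R : realType) (n : nat) (p : R) (T : nat)
    (E : pred (T.-tuple (interaction n))) : R :=
  \sum_(w : T.-tuple (interaction n) | E w) \prod_(x <- w) iweight p x.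

(** The bad event: at some time t (after k <= T interactions, i.e. parallel
    time k/n), n^{-0.45} <= c_{>=i}(t) <= 0.1 but
    c_{>=i+1}(t) > 0.9 p c_{>=i}(t)^2 + d_{>=i+1}(t). *)
Definition bad (R : realType) (n : nat) (p : R) (i : nat) (T : nat)
    (w : T.-tuple (interaction n)) : bool :=
  [exists k : 'I_T.+1,
    let cd := run R i (take k w) in
    let c := c_ge R i cd.1 in
    [&& thr R n <= c, c <= 1%:R / 10%:R &
        9%:R / 10%:R * p * c ^+ 2 + #|cd.2|%:R / n%:R < c_ge R i.+1 cd.1]].

(* Main.v *)
Require Import Defs.
From HB Require Import structures.
From mathcomp Require Import all_boot all_order all_algebra.
From mathcomp Require Import reals exp sequences.
From mathcomp Require Import lra ring.
Set Implicit Arguments. Unset Strict Implicit. Unset Printing Implicit Defensive.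
Import Order.TTheory GRing.Theory Num.Theory.
Local Open Scope ring_scope.

Lemma setU1_id (T : finType) (a : T) (A : {set T}) : a \in A -> a |: A = A.
Proof. by move=> h; apply/setUidPr; rewrite sub1set. Qed.

Section Step.
Variables (R : realType) (n : nat) (i : nat).

Definition stepcd (cd : config n * {set 'I_n}) (x : interaction n) :=
  (clock_step cd.1 x, early_step R i cd.1 cd.2 x).

Definition abv (st : config n) : {set 'I_n} := [set y | (i < st y)%N].
Definition geqs (st : config n) : {set 'I_n} := [set y | (i <= st y)%N].
Definition upd (st : config n) z v : config n := fun y => if y == z then v else st y.

Lemma c_geE st : c_ge R i st = #|geqs st|%:R / n%:R.
Proof. by rewrite /c_ge /geqs cardsE. Qed.
Lemma c_ge1E st : c_ge R i.+1 st = #|abv st|%:R / n%:R.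
Proof. by rewrite /c_ge /abv cardsE. Qed.

Definition A1 (cd : config n * {set 'I_n}) (x : interaction n) : bool :=
  let: (a, b, coin) := x in
  [&& coin, cd.1 a == i, cd.1 b == i & ~~ (c_ge R i cd.1 < thr R n)].
Definition A2 (cd : config n * {set 'I_n}) (x : interaction n) : bool :=
  let: (a, b, coin) := x in
  ((i < cd.1 a) && (a \notin cd.2) && (cd.1 b <= i))%N ||
  ((i < cd.1 b) && (b \notin cd.2) && (cd.1 a <= i))%N.
Definition B0 (cd : config n * {set 'I_n}) (x : interaction n) : bool :=
  let: (a, b, coin) := x in
  ((i <= cd.1 a) && (cd.1 b < i))%N || ((i <= cd.1 b) && (cd.1 a < i))%N.

Lemma step_shape (cd : config n * {set 'I_n}) (x : interaction n) :
  (stepcd cd x = cd /\ ~~ B0 cd x) \/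
  exists z v (cond : bool), [/\ (cd.1 z <= v)%N, (stepcd cd x).1 = upd cd.1 z v,
     (stepcd cd x).2 = (if cond then z |: cd.2 else cd.2),
     (cond -> (cd.1 z <= i < v)%N) /\
     ((i < v)%N -> (cd.1 z <= i)%N -> ~~ cond -> A1 cd x || A2 cd x) &
     (B0 cd x -> (cd.1 z < i <= v)%N)].
Proof.
case: cd => st D; case: x => [[a b] coin]; rewrite /stepcd /clock_step /early_step /=.
case: eqP => Hab.
  case: coin.
    right; exists b, (st b).+1, ((st b == i) && (c_ge R i st < thr R n)).
    split => //.
    - split.
      + by case/andP => /eqP -> _; rewrite leqnn ltnSn.
      + move=> h1 h2; rewrite negb_and => h3; apply/orP; left.
        have eb : st b = i by apply/eqP; rewrite eqn_leq h2 -ltnS h1.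
        move: h3; rewrite eb eqxx /= => ->; by rewrite Hab eb eqxx.
    - by rewrite Hab; case/orP => /andP [h1 h2]; move: (leq_ltn_trans h1 h2); rewrite ltnn.
  left; split => //; rewrite Hab; apply/negP; case/orP => /andP [h1 h2];
    by move: (leq_ltn_trans h1 h2); rewrite ltnn.
case: ifP => Hba.
  right; exists b, (st a), [&& (st b <= i)%N, (i < st a)%N & a \in D].
  split => //.
  - exact: ltnW.
  - split.
    + by case/and3P => -> ->.
    + move=> h1 h2; rewrite /= in h1 h2 *; rewrite h1 h2 /= => h3; apply/orP; right; apply/orP; left.
      by case: (a \in D) h3.
  - case/orP => /andP [h1 h2]; first by rewrite h2 h1.
    have := ltn_trans (leq_ltn_trans h1 Hba) h2; by rewrite ltnn.
right; exists a, (st b), [&& (st a <= i)%N, (i < st b)%N & b \in D].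
have Hab' : (st a < st b)%N by rewrite ltn_neqAle leqNgt Hba andbT; apply/eqP.
split => //.
- exact: ltnW.
- split.
  + by case/and3P => -> ->.
  + move=> h1 h2; rewrite /= in h1 h2 *; rewrite h1 h2 /= => h3; apply/orP; right; apply/orP; right.
    by case: (b \in D) h3.
- case/orP => /andP [h1 h2]; last by rewrite h2 h1.
  have := ltn_trans (leq_ltn_trans h1 Hab') h2; by rewrite ltnn.
Qed.

Lemma abv_upd st z v : (st z <= v)%N ->
  abv (upd st z v) = if (i < v)%N then z |: abv st else abv st.
Proof.
move=> hv; apply/setP => y; rewrite /abv /upd.
case: ifP => hiv; rewrite !inE; case: (y =P z) => [->|ne] //=.
by rewrite hiv; apply/esym/negbTE; rewrite -leqNgt (leq_trans hv) // leqNgt hiv.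
Qed.

Lemma geqs_upd st z v : (st z <= v)%N ->
  geqs (upd st z v) = if (i <= v)%N then z |: geqs st else geqs st.
Proof.
move=> hv; apply/setP => y; rewrite /geqs /upd.
case: ifP => hiv; rewrite !inE; case: (y =P z) => [->|ne] //=.
by rewrite hiv; apply/esym/negbTE; rewrite -ltnNge (leq_ltn_trans hv) // ltnNge hiv.
Qed.

Lemma step_mono (cd : config n * {set 'I_n}) (x : interaction n) y : (cd.1 y <= (stepcd cd x).1 y)%N.
Proof.
case: (step_shape cd x) => [[-> _] //|[z [v [cond [hv -> _ _ _]]]]].
by rewrite /upd; case: eqP => [->|].
Qed.

Lemma step_Dsub (cd : config n * {set 'I_n}) (x : interaction n) : cd.2 \subset (stepcd cd x).2.
Proof.
case: (step_shape cd x) => [[-> _] //|[z [v [cond [_ _ -> _ _]]]]].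
by case: cond => //; apply: subsetUr.
Qed.

Lemma abv_mono (cd : config n * {set 'I_n}) (x : interaction n) : abv cd.1 \subset abv (stepcd cd x).1.
Proof.
apply/subsetP => y; rewrite !inE => h; exact: leq_trans h (step_mono cd x y).
Qed.

Lemma geqs_mono (cd : config n * {set 'I_n}) (x : interaction n) : geqs cd.1 \subset geqs (stepcd cd x).1.
Proof.
apply/subsetP => y; rewrite !inE => h; exact: leq_trans h (step_mono cd x y).
Qed.

Lemma c_ge_mono (cd : config n * {set 'I_n}) (x : interaction n) : c_ge R i cd.1 <= c_ge R i (stepcd cd x).1.
Proof.
rewrite !c_geE ler_wpM2r // ?invr_ge0 ?ler0n // ler_nat.
exact: subset_leq_card (geqs_mono cd x).
Qed.

Lemma B0_step (cd : config n * {set 'I_n}) (x : interaction n) : B0 cd x -> #|geqs (stepcd cd x).1| = (#|geqs cd.1|).+1.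
Proof.
case: (step_shape cd x) => [[_ /negbTE -> //]|[z [v [cond [hv -> _ _ hB]]]]].
move=> /hB /andP [h1 h2]; rewrite geqs_upd // h2 cardsU1.
by rewrite inE leqNgt h1.
Qed.

Definition Xr (cd : config n * {set 'I_n}) : R := #|abv cd.1|%:R - #|cd.2|%:R.

Definition Inv (cd : config n * {set 'I_n}) : bool :=
  (cd.2 \subset abv cd.1) && ((c_ge R i cd.1 < thr R n) ==> (abv cd.1 \subset cd.2)).

Lemma X_step (cd : config n * {set 'I_n}) (x : interaction n) : cd.2 \subset abv cd.1 ->
  Xr (stepcd cd x) <= Xr cd + (A1 cd x || A2 cd x)%:R.
Proof.
move=> hD; rewrite /Xr; case: (step_shape cd x) => [[-> _]|[z [v [cond [hv -> -> [hc1 hA] _]]]]].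
  by rewrite lerDl ler0n.
rewrite abv_upd //.
have zD : z \notin abv cd.1 -> z \notin cd.2.
  by apply: contra => h; apply: (subsetP hD).
case: (boolP (i < v)%N) => hiv; last first.
  case: cond hc1 hA => [/(_ isT) /andP [_ ]|_ _]; first by rewrite (negbTE hiv).
  by rewrite lerDl ler0n.
case: (boolP (z \in abv cd.1)) => hz.
  rewrite (setU1_id hz); case: cond {hc1 hA} => //; last by rewrite lerDl ler0n.
  rewrite cardsU1 natrD.
  have := ler0n R (z \notin cd.2); have := ler0n R (A1 cd x || A2 cd x); lra.
have hzi : (cd.1 z <= i)%N by move: hz; rewrite inE -leqNgt.
rewrite cardsU1 hz add1n -addn1 natrD.
case: cond {hc1} hA => hA.
  rewrite cardsU1 (zD hz) add1n -addn1 natrD.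
  have := ler0n R (A1 cd x || A2 cd x); lra.
rewrite (hA hiv hzi isT) /=; lra.
Qed.

Lemma Inv_step (cd : config n * {set 'I_n}) (x : interaction n) : Inv cd -> Inv (stepcd cd x).
Proof.
case/andP => hD hI; apply/andP; split.
  case: (step_shape cd x) => [[-> _] //|[z [v [cond [hv e1 e2 [hc1 _] _]]]]].
  rewrite {}e2; case: cond hc1 => [/(_ isT) /andP [_ hiv]|_].
    rewrite subUset sub1set (subset_trans hD (abv_mono cd x)) andbT.
    by rewrite e1 abv_upd // hiv setU11.
  exact: subset_trans hD (abv_mono cd x).
apply/implyP => hc.
have hc0 : c_ge R i cd.1 < thr R n := le_lt_trans (c_ge_mono cd x) hc.
have hS := implyP hI hc0.
case: (step_shape cd x) => [[-> _] //|[z [v [cond [hv e1 e2 [hc1 hA] _]]]]].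
rewrite {}e1 {}e2 abv_upd //.
have nA : ~~ (A1 cd x || A2 cd x).
  case: x {hA hc} => [[a b] coin] /=; rewrite hc0 !andbF /=.
  apply/negP; case/orP => /andP [/andP [h1 h2] _].
    by move: h2; rewrite (subsetP hS) // inE.
  by move: h2; rewrite (subsetP hS) // inE.
case: (boolP (i < v)%N) => hiv.
  case: (boolP (z \in abv cd.1)) => hz.
    rewrite (setU1_id hz); case: cond {hA hc1} => //.
    exact: subset_trans hS (subsetUr _ _).
  have hzi : (cd.1 z <= i)%N by move: hz; rewrite inE -leqNgt.
  case: cond hA {hc1} => hA; first by rewrite setUSS.
  by move: (hA hiv hzi isT); rewrite (negbTE nA).
by case: cond {hA hc1} => //; apply: subset_trans hS (subsetUr _ _).
Qed.

End Step.
Section Sums.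
Variables (R : realType) (n : nat).

Lemma sum_ind (A : {set 'I_n}) : \sum_a ((a \in A)%:R : R) = #|A|%:R.
Proof.
rewrite -sum1_card natr_sum [RHS]big_mkcond /=; apply: eq_bigr => a _; by case: (a \in A).
Qed.

Lemma sum_one : \sum_(a : 'I_n) (1 : R) = n%:R.
Proof.
rewrite -[in RHS](card_ord n) -cardsT -sum_ind; apply: eq_bigr => a _; by rewrite inE.
Qed.

Lemma sum_neq (a : 'I_n) : \sum_b (((a != b) : nat)%:R : R) = n%:R - 1.
Proof.
transitivity (\sum_b (1 - (((b \in [set a]) : nat)%:R : R))).
  by apply: eq_bigr => b _; rewrite in_set1 eq_sym; case: (b == a); rewrite ?subr0 ?subrr.
by rewrite sumrB sum_one sum_ind cards1.
Qed.

Lemma sum_inter (F : interaction n -> R) :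
  \sum_x F x = \sum_a \sum_b (F (a, b, true) + F (a, b, false)).
Proof.
transitivity (\sum_(x : ('I_n * 'I_n) * bool) F (x.1, x.2)).
  by apply: eq_bigr => -[].
rewrite -(pair_bigA _ (fun ab c => F (ab, c))) /=.
transitivity (\sum_(ab : 'I_n * 'I_n) (F (ab, true) + F (ab, false))).
  by apply: eq_bigr => ab _; rewrite big_bool.
rewrite (pair_bigA _ (fun a b => F (a, b, true) + F (a, b, false))) /=.
by apply: eq_bigr => -[a b] _.
Qed.

Lemma sum_prod (f g : 'I_n -> R) : \sum_a \sum_b f a * g b = (\sum_a f a) * (\sum_b g b).
Proof. by rewrite mulr_suml; apply: eq_bigr => a _; rewrite mulr_sumr. Qed.

End Sums.
Lemma ler_b (R : realType) (b1 b2 : bool) : (b1 -> b2) -> ((b1 : nat)%:R : R) <= (b2 : nat)%:R.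
Proof. by case: b1; case: b2 => // /(_ isT). Qed.

Lemma bmul (R : realType) (b1 b2 : bool) :
  ((b1 : nat)%:R : R) * (b2 : nat)%:R = ((b1 && b2) : nat)%:R.
Proof. by case: b1; case: b2; rewrite /= ?mulr1 ?mulr0 ?mul0r. Qed.

Lemma bor_le (R : realType) (b1 b2 : bool) :
  ((b1 || b2 : bool) : nat)%:R <= ((b1 : nat)%:R + (b2 : nat)%:R : R).
Proof. by case: b1; case: b2; rewrite /= ?addr0 ?add0r // lerDl ler01. Qed.

Section Prob.
Variables (R : realType) (n i : nat) (p : R).
Hypotheses (hp0 : 0 <= p) (hp1 : p <= 1) (hn : (1 < n)%N).

Definition u : R := (n%:R * (n%:R - 1))^-1.

Lemma n1_gt0 : 0 < (n%:R : R) - 1.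
Proof. by rewrite subr_gt0 ltr1n. Qed.

Lemma u_ge0 : 0 <= u.
Proof. by rewrite /u invr_ge0 mulr_ge0 // ltW // n1_gt0. Qed.

Lemma iw_pair (a b : 'I_n) : iweight p (a, b, true) + iweight p (a, b, false) = ((a != b) : nat)%:R * u.
Proof.
rewrite /iweight /=; case: (a != b); rewrite /u; last by rewrite addr0 mul0r.
by rewrite -mulrDr [p + _]addrC subrK mulr1 mul1r.
Qed.

Lemma iw_ge0 (x : interaction n) : 0 <= iweight p x.
Proof.
case: x => [[a b] []]; rewrite /iweight; case: (a != b) => //;
  apply: mulr_ge0 (u_ge0) _ => //; by rewrite subr_ge0.
Qed.

Lemma iw_true (a b : 'I_n) : iweight p (a, b, true) <= u * p.
Proof. rewrite /iweight; case: (a != b) => //; apply: mulr_ge0 (u_ge0) hp0. Qed.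

Lemma sum_iw : \sum_(x : interaction n) iweight p x = 1.
Proof.
rewrite sum_inter.
transitivity (\sum_(a : 'I_n) 1 * ((n%:R - 1) * u)).
  apply: eq_bigr => a _; rewrite mul1r -(sum_neq R a) mulr_suml.
  by apply: eq_bigr => b _; exact: iw_pair.
rewrite -mulr_suml sum_one mulrA /u mulfV //.
by rewrite mulf_neq0 // ?pnatr_eq0 -?lt0n ?(ltnW hn) // gt_eqF // n1_gt0.
Qed.

Definition Xr' (cd : config n * {set 'I_n}) := Xr R i cd.

Lemma sum_A1 (cd : config n * {set 'I_n}) :
  \sum_(x : interaction n) iweight p x * (A1 R i cd x : nat)%:R <= u * p * (#|geqs i cd.1|%:R) ^+ 2.
Proof.
rewrite sum_inter.
apply: le_trans (_ : _ <= \sum_a \sum_b (u * p) * (((a \in geqs i cd.1) : nat)%:R * ((b \in geqs i cd.1) : nat)%:R)) _.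
  apply: ler_sum => a _; apply: ler_sum => b _.
  have -> : (A1 R i cd (a, b, false) : nat) = 0%N by [].
  rewrite mulr0 addr0 bmul; apply: ler_pM => //; first exact: iw_ge0.
    exact: iw_true.
  apply: ler_b; rewrite /A1 !inE; case/and4P => _ /eqP -> /eqP -> _; by rewrite leqnn.
rewrite expr2 -!sum_ind -sum_prod mulr_sumr; apply: ler_sum => a _.
by rewrite mulr_sumr.
Qed.


Lemma sum_A2 (cd : config n * {set 'I_n}) : cd.2 \subset abv i cd.1 ->
  \sum_(x : interaction n) iweight p x * (A2 i cd x : nat)%:R <= u * (2 * n%:R * Xr R i cd).
Proof.
move=> hD; set Y := abv i cd.1 :\: cd.2.
have hY : #|Y|%:R = Xr R i cd.
  rewrite /Y cardsD (setIidPr hD) natrB //; exact: subset_leq_card.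
rewrite sum_inter.
apply: le_trans (_ : _ <= \sum_a \sum_b u * (((a \in Y) : nat)%:R * 1 + ((b \in Y) : nat)%:R * 1)) _.
  apply: ler_sum => a _; apply: ler_sum => b _.
  have -> : (A2 i cd (a, b, false) : nat) = A2 i cd (a, b, true) by [].
  rewrite -mulrDl iw_pair [_ * u]mulrC -mulrA ler_wpM2l ?u_ge0 //.
  apply: le_trans (_ : _ <= (A2 i cd (a, b, true) : nat)%:R) _.
    by case: (a != b); rewrite ?mul1r ?mul0r ?ler0n.
  rewrite !mulr1; apply: (@le_trans _ _ ((((a \in Y) || (b \in Y)) : bool) : nat)%:R); last exact: bor_le.
  apply: ler_b; rewrite /A2 /Y !inE; case/orP => /andP [/andP [h1 h2] _]; by rewrite h1 h2 ?orbT.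
under eq_bigr => a _ do rewrite -mulr_sumr.
rewrite -mulr_sumr ler_wpM2l ?u_ge0 //.
under eq_bigr => a _ do rewrite big_split /=.
rewrite big_split /= sum_prod.
rewrite [X in _ + X](eq_bigr (fun a => 1 * \sum_b ((b \in Y) : nat)%:R * 1)); last by move=> *; rewrite mul1r.
rewrite -mulr_suml sum_one.
under eq_bigr => b _ do rewrite mulr1.
rewrite sum_ind hY le_eqVlt; apply/orP; left; apply/eqP; rewrite -mulr_suml sum_one; ring.
Qed.

Lemma sum_B0 (cd : config n * {set 'I_n}) :
  \sum_(x : interaction n) iweight p x * (B0 i cd x : nat)%:R =
  u * (2 * #|geqs i cd.1|%:R * (n%:R - #|geqs i cd.1|%:R)).
Proof.
set G := geqs i cd.1.
rewrite sum_inter.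
transitivity (\sum_a \sum_b u * (((a \in G) : nat)%:R * (1 - ((b \in G) : nat)%:R) + ((b \in G) : nat)%:R * (1 - ((a \in G) : nat)%:R))).
  apply: eq_bigr => a _; apply: eq_bigr => b _.
  have -> : (B0 i cd (a, b, false) : nat) = B0 i cd (a, b, true) by [].
  rewrite -mulrDl iw_pair [_ * u]mulrC -mulrA; congr (_ * _).
  rewrite /B0 /G !inE.
  case: (a =P b) => [->|ne] /=.
    rewrite mul0r; case: (leqP i (cd.1 b)) => h /=; rewrite ?subrr ?mulr0 ?subr0 ?mul0r ?addr0 //.
  rewrite mul1r; case: (leqP i (cd.1 a)) => h1; case: (leqP i (cd.1 b)) => h2;
    by rewrite /= ?subrr ?mulr0 ?subr0 ?mul0r ?mulr1 ?addr0 ?add0r.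
under eq_bigr => a _ do rewrite -mulr_sumr.
rewrite -mulr_sumr; congr (_ * _).
under eq_bigr => a _ do rewrite big_split /=.
rewrite big_split /= sum_prod [X in _ + X]exchange_big /= sum_prod.
rewrite !sumrB sum_one sum_ind; ring.
Qed.

End Prob.
Lemma sum_tuple_cons (R : realType) (T : finType) (m : nat) (f : m.+1.-tuple T -> R) :
  \sum_(w : m.+1.-tuple T) f w = \sum_(x : T) \sum_(w : m.-tuple T) f [tuple of x :: w].
Proof.
rewrite (pair_bigA _ (fun (x : T) (w : m.-tuple T) => f [tuple of x :: w])) /=.
rewrite (reindex (fun xw : T * m.-tuple T => [tuple of xw.1 :: xw.2])) //=.
exists (fun w : m.+1.-tuple T => (thead w, [tuple of behead w])).
  by move=> [x w] _ /=; rewrite theadE; congr (_, _); apply: val_inj.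
by move=> w _ /=; rewrite -tuple_eta.
Qed.

Lemma sum_tuple0 (R : realType) (T : finType) (f : 0.-tuple T -> R) :
  \sum_(w : 0.-tuple T) f w = f [tuple].
Proof.
rewrite (eq_bigr (fun _ => f [tuple])); last by move=> w _; rewrite tuple0.
by rewrite sumr_const card_tuple expn0.
Qed.
Lemma key (R : realType) (p lam c E : R) : 0 < p -> p <= 1 -> 1/51 <= lam -> lam <= 1/50 ->
  0 <= c -> c <= 1/10 -> 0 <= E ->
  2 * lam * (9/10 * p) * c <= E * (1 + 2 * lam * (9/10 * p) * c) ->
  1/50 * (p + 2 * (9/10 * p)) * c ^+ 2 <= 2 * E * c * (1 - (1 + 9/10 * p) * c).
Proof.
move=> p0 p1 l0 l1 c0 c1 E0 hE.
set y := 2 * lam * (9/10 * p) * c in hE *.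
have hy0 : 0 <= y by rewrite /y; apply: mulr_ge0; [apply: mulr_ge0|]; [lra|nra|lra].
have hpc : 0 <= p * c by nra.
have hy1 : y <= 9/2500.
  have : lam * (p * c) <= 1/50 * (1/10) by nra.
  rewrite /y; nra.
have hy2 : 2 * (1/51) * (9/10) * (p * c) <= y.
  have : 1/51 * (p * c) <= lam * (p * c) by nra.
  rewrite /y; nra.
have hE2 : y <= E * (2509/2500).
  have : E * y <= E * (9/2500) by nra.
  nra.
have h81 : 81/100 <= 1 - (1 + 9/10 * p) * c by nra.
have hEh : E * (81/100) <= E * (1 - (1 + 9/10 * p) * c) by nra.
have inner : 1/50 * (p + 2 * (9/10 * p)) * c <= 2 * E * (1 - (1 + 9/10 * p) * c).
  have : 1/50 * (p + 2 * (9/10 * p)) * c = 14/250 * (p * c) by field.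
  nra.
have -> : 1/50 * (p + 2 * (9/10 * p)) * c ^+ 2 = (1/50 * (p + 2 * (9/10 * p)) * c) * c by field.
have -> : 2 * E * c * (1 - (1 + 9/10 * p) * c) = (2 * E * (1 - (1 + 9/10 * p) * c)) * c by field.
by apply: ler_wpM2r.
Qed.

Section Main.
Variables (R : realType) (n i : nat) (p : R).
Hypotheses (hp0 : 0 < p) (hp1 : p <= 1) (hn : (1 < n)%N).

Definition BadS (cd : config n * {set 'I_n}) : bool :=
  let c := c_ge R i cd.1 in
  [&& thr R n <= c, c <= 1%:R / 10%:R &
      9%:R / 10%:R * p * c ^+ 2 + #|cd.2|%:R / n%:R < c_ge R i.+1 cd.1].

Definition EBk (m : nat) (cd : config n * {set 'I_n}) (s : seq (interaction n)) : bool :=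
  [exists k : 'I_m.+1, BadS (foldl (stepcd R i) cd (take k s))].

Lemma bad_EBk T (w : T.-tuple (interaction n)) :
  @bad R n p i T w = EBk T (@init_config n, set0) w.
Proof. by []. Qed.

Lemma EBk0 cd s : EBk 0 cd s = BadS cd.
Proof.
apply/existsP/idP => [[k]|h]; first by rewrite (ord1 k) take0.
by exists ord0; rewrite take0.
Qed.

Lemma EBkS m cd x s : EBk m.+1 cd (x :: s) = BadS cd || EBk m (stepcd R i cd x) s.
Proof.
apply/existsP/orP => [[[[|k] hk]]|[h|/existsP [[k hk] h]]] /=.
- by move=> h; left.
- by move=> h; right; apply/existsP; exists (Ordinal (hk : (k < m.+1)%N)).
- by exists ord0.
- by exists (Ordinal (hk : (k.+1 < m.+2)%N)).
Qed.

Definition Pr (m : nat) (cd : config n * {set 'I_n}) : R :=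
  \sum_(w : m.-tuple (interaction n)) (\prod_(x <- w) iweight p x) * (EBk m cd w : nat)%:R.

Lemma SP m : \sum_(w : m.-tuple (interaction n)) \prod_(x <- w) iweight p x = 1.
Proof.
elim: m => [|m IH]; first by rewrite sum_tuple0 big_nil.
rewrite sum_tuple_cons.
under eq_bigr => x _ do under eq_bigr => w _ do rewrite big_cons.
under eq_bigr => x _ do rewrite -mulr_sumr IH mulr1.
exact: sum_iw p hn.
Qed.

Lemma Pr0 cd : Pr 0 cd = (BadS cd : nat)%:R.
Proof. by rewrite /Pr sum_tuple0 big_nil mul1r EBk0. Qed.

Lemma PrS m cd : Pr m.+1 cd =
  if BadS cd then 1 else \sum_(x : interaction n) iweight p x * Pr m (stepcd R i cd x).
Proof.
rewrite /Pr sum_tuple_cons.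
under eq_bigr => x _ do under eq_bigr => w _ do rewrite big_cons EBkS.
case: (BadS cd) => /=.
  under eq_bigr => x _ do under eq_bigr => w _ do rewrite mulr1.
  under eq_bigr => x _ do rewrite -mulr_sumr SP mulr1.
  exact: sum_iw p hn.
apply: eq_bigr => x _; rewrite mulr_sumr; apply: eq_bigr => w _; by rewrite mulrA.
Qed.

End Main.

Section Main2.
Variables (R : realType) (n i : nat) (p : R).
Hypotheses (hp0 : 0 < p) (hp1 : p <= 1) (hn : (1 < n)%N).

Definition lam : R := ln (51%:R / 50%:R).
Definition alpha : R := 9%:R / 10%:R * p.
Definition Mt : R := thr R n * n%:R.
Definition Sv (cd : config n * {set 'I_n}) : R := Num.max (#|geqs i cd.1|%:R) Mt.
Definition Fv (cd : config n * {set 'I_n}) : R :=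
  expR (lam * Xr R i cd - lam * alpha * Sv cd ^+ 2 / n%:R).
Definition Gv (cd : config n * {set 'I_n}) : R :=
  if c_ge R i cd.1 <= 1%:R / 10%:R then Fv cd else 0.

Lemma n_gt0 : 0 < (n%:R : R).
Proof. by rewrite ltr0n (ltn_trans _ hn). Qed.

Lemma explam : expR lam = 51 / 50.
Proof. by rewrite /lam lnK // posrE divr_gt0. Qed.

Lemma lam_ub : lam <= 1 / 50.
Proof.
rewrite /lam; have -> : (51%:R / 50%:R : R) = 1 + 1 / 50 by field.
apply: le_ln1Dx; lra.
Qed.

Lemma lam_lb : 1 / 51 <= lam.
Proof.
have h := expR_ge1Dx (- lam).
rewrite expRN explam in h.
have : (51 / 50 : R)^-1 = 50 / 51 by field.
move=> e; rewrite e in h; lra.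
Qed.

Lemma thr_gt0 : 0 < thr R n.
Proof. by rewrite /thr powR_gt0 // n_gt0. Qed.

Lemma Mt_ge0 : 0 <= Mt.
Proof. by rewrite /Mt mulr_ge0 // ltW // ?thr_gt0 ?n_gt0. Qed.

Lemma alpha_ge0 : 0 <= alpha.
Proof. rewrite /alpha; apply: mulr_ge0 => //; [lra | exact: ltW]. Qed.

Lemma Sv_ge0 cd : 0 <= Sv cd.
Proof. by rewrite /Sv le_max Mt_ge0 orbT. Qed.

Lemma Fv_ge0 cd : 0 <= Fv cd.
Proof. exact: expR_ge0. Qed.

Lemma Gv_ge0 cd : 0 <= Gv cd.
Proof. by rewrite /Gv; case: ifP => // _; exact: Fv_ge0. Qed.


Lemma lam_ge0 : 0 <= lam.
Proof. have := lam_lb; lra. Qed.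

Definition Kc : R := lam * alpha / n%:R.

Lemma Kc_ge0 : 0 <= Kc.
Proof. rewrite /Kc; apply: divr_ge0; last exact: ler0n. apply: mulr_ge0; [exact: lam_ge0 | exact: alpha_ge0]. Qed.

Lemma expo_eq s : lam * alpha * s ^+ 2 / n%:R = Kc * s ^+ 2.
Proof. by rewrite /Kc mulrAC. Qed.

Lemma Fv_le (cd cd' : config n * {set 'I_n}) d :
  lam * Xr R i cd' - Kc * Sv cd' ^+ 2 <= lam * Xr R i cd - Kc * Sv cd ^+ 2 + d ->
  Fv cd' <= Fv cd * expR d.
Proof. by move=> h; rewrite /Fv !expo_eq -expRD ler_expR. Qed.

Lemma cthr (st : config n) : (thr R n <= c_ge R i st) = (Mt <= #|geqs i st|%:R).
Proof. by rewrite c_geE (ler_pdivlMr _ _ n_gt0). Qed.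

Lemma Xr_id (cd : config n * {set 'I_n}) :
  alpha * #|geqs i cd.1|%:R ^+ 2 / n%:R - Xr R i cd =
  n%:R * (9%:R / 10%:R * p * c_ge R i cd.1 ^+ 2 + #|cd.2|%:R / n%:R - c_ge R i.+1 cd.1).
Proof.
rewrite c_geE c_ge1E /Xr /alpha; have := n_gt0; move=> h.
field; by rewrite gt_eqF.
Qed.

Lemma nonbad_X (cd : config n * {set 'I_n}) : ~~ BadS i p cd -> thr R n <= c_ge R i cd.1 -> c_ge R i cd.1 <= 1%:R / 10%:R ->
  Xr R i cd <= alpha * #|geqs i cd.1|%:R ^+ 2 / n%:R.
Proof.
rewrite /BadS => + h1 h2; rewrite h1 h2 /= -leNgt => h.
rewrite -subr_ge0 Xr_id mulr_ge0 // ?subr_ge0 // ltW // n_gt0.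
Qed.

Lemma bad_F (cd : config n * {set 'I_n}) : BadS i p cd -> 1 <= Fv cd.
Proof.
rewrite /BadS => /and3P [h1 h2 h3].
have hC : Mt <= #|geqs i cd.1|%:R by rewrite -cthr.
rewrite /Fv /Sv (max_l hC) -[X in X <= _]expR0 ler_expR.
have h : alpha * #|geqs i cd.1|%:R ^+ 2 / n%:R - Xr R i cd < 0.
  by rewrite Xr_id pmulr_rlt0 ?n_gt0 // subr_lt0.
have e : lam * Xr R i cd - lam * alpha * #|geqs i cd.1|%:R ^+ 2 / n%:R =
  lam * (Xr R i cd - alpha * #|geqs i cd.1|%:R ^+ 2 / n%:R) by ring.
rewrite e; apply: mulr_ge0; first exact: lam_ge0.
rewrite subr_ge0 ltW // -subr_lt0 //.
Qed.


Lemma nA_lem (cd : config n * {set 'I_n}) x : c_ge R i cd.1 < thr R n -> abv i cd.1 \subset cd.2 ->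
  ~~ (A1 R i cd x || A2 i cd x).
Proof.
move=> hc0 hS.
case: x => [[a b] coin] /=; rewrite hc0 !andbF /=.
apply/negP; case/orP => /andP [/andP [h1 h2] _].
  by move: h2; rewrite (subsetP hS) // inE.
by move: h2; rewrite (subsetP hS) // inE.
Qed.

Lemma A1B0 (cd : config n * {set 'I_n}) x : A1 R i cd x -> ~~ B0 i cd x.
Proof.
case: x => [[a b] coin] /=; case/and4P => _ /eqP -> /eqP -> _.
by rewrite ltnn !andbF.
Qed.

Lemma drift (cd : config n * {set 'I_n}) : Inv R i cd -> ~~ BadS i p cd ->
  c_ge R i cd.1 <= 1%:R / 10%:R ->
  \sum_(x : interaction n) iweight p x * Fv (stepcd R i cd x) <= Fv cd.
Proof.
case/andP => hD hI nB hc.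
have p0 := ltW hp0.
have iw0 := iw_ge0 p0 hp1 hn.
pose C : R := #|geqs i cd.1|%:R.
have C0 : 0 <= C by exact: ler0n.
have hCC x : C <= #|geqs i (stepcd R i cd x).1|%:R.
  by rewrite ler_nat; apply: subset_leq_card; apply: geqs_mono.
have Sv_mono x : Sv cd <= Sv (stepcd R i cd x) by apply: le_max2 (hCC x) (lexx _).
have hK := Kc_ge0; have hl := lam_ge0.
case: (ltP (c_ge R i cd.1) (thr R n)) => hct.
  have hS := implyP hI hct.
  apply: le_trans (_ : _ <= \sum_(x : interaction n) iweight p x * Fv cd) _.
    apply: ler_sum => x _; rewrite ler_wpM2l ?iw0 //.
    have h := @Fv_le cd (stepcd R i cd x) 0; rewrite expR0 mulr1 in h; apply: h.
    have hX := X_step R x hD; rewrite (negbTE (nA_lem x hct hS)) in hX.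
    have f0 : ((false : nat)%:R : R) = 0 by [].
    rewrite f0 addr0 in hX.
    have s0 := Sv_ge0 cd; have s1 := Sv_mono x.
    have hS2 : Sv cd ^+ 2 <= Sv (stepcd R i cd x) ^+ 2 by rewrite !expr2; nra.
    have : lam * Xr R i (stepcd R i cd x) <= lam * Xr R i cd by apply: ler_wpM2l.
    have : Kc * Sv cd ^+ 2 <= Kc * Sv (stepcd R i cd x) ^+ 2 by apply: ler_wpM2l.
    lra.
  by rewrite -mulr_suml sum_iw // mul1r.
have hCM : Mt <= C by rewrite -cthr.
have hSv : Sv cd = C by rewrite /Sv max_l.
have hXb := nonbad_X nB hct hc.
have nn := n_gt0.
pose c := c_ge R i cd.1.
have hCn : C = c * n%:R by rewrite /c c_geE divfK // gt_eqF.
have c0 : 0 <= c by rewrite /c c_geE divr_ge0.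
have c1 : c <= 1 / 10 by move: hc; rewrite /c mulr1n.
pose y := 2 * lam * (9 / 10 * p) * c.
have hy : Kc * (2 * C) = y.
  rewrite /y /Kc /alpha hCn; field; by rewrite gt_eqF.
have y0 : 0 <= y by rewrite -hy; apply: mulr_ge0 => //; apply: mulr_ge0.
pose E := 1 - expR (- y).
have E0 : 0 <= E by rewrite /E subr_ge0 expR_le1 oppr_le0.
have Ey : y <= E * (1 + y).
  have h1 := expR_ge1Dx y.
  have h2 : expR (- y) * expR y = 1 by rewrite expRN mulVf // gt_eqF // expR_gt0.
  have h3 := expR_ge0 (- y).
  have : expR (- y) * (1 + y) <= expR (- y) * expR y by apply: ler_wpM2l.
  rewrite /E; nra.
pose eps : R := 1 / 50.
have eps0 : 0 <= eps by rewrite /eps; lra.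
have heps : expR lam = 1 + eps by rewrite explam /eps; field.
pose g x := 1 + eps * (A1 R i cd x : nat)%:R + (eps + E) * (A2 i cd x : nat)%:R
   - E * (B0 i cd x : nat)%:R.
have b01 (b : bool) : 0 <= (b : nat)%:R :> R /\ (b : nat)%:R <= 1 :> R by case: b.
have pw x : Fv (stepcd R i cd x) <= Fv cd * g x.
  have hX := X_step R x hD.
  have s1 := Sv_mono x.
  have s0 := Sv_ge0 cd.
  have hS2 : Sv cd ^+ 2 <= Sv (stepcd R i cd x) ^+ 2 by rewrite !expr2; nra.
  have hKS : Kc * Sv cd ^+ 2 <= Kc * Sv (stepcd R i cd x) ^+ 2 by apply: ler_wpM2l.
  case hA: (A1 R i cd x || A2 i cd x).
    apply: le_trans (@Fv_le cd (stepcd R i cd x) lam _) _.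
      rewrite hA in hX.
      have : lam * Xr R i (stepcd R i cd x) <= lam * (Xr R i cd + 1) by apply: ler_wpM2l.
      lra.
    rewrite heps ler_wpM2l ?Fv_ge0 // /g.
    have [a10 a11] := b01 (A1 R i cd x).
    have [b10 b11] := b01 (B0 i cd x).
    case h2: (A2 i cd x).
      have e1 : (((true : bool) : nat)%:R : R) = 1 by [].
      rewrite e1; nra.
    move: hA; rewrite h2 orbF => h1.
    rewrite (negbTE (A1B0 h1)) h1.
    have e1 : (((true : bool) : nat)%:R : R) = 1 by [].
    have e0 : (((false : bool) : nat)%:R : R) = 0 by [].
    rewrite e1 e0; lra.
  have e0 : (((false : bool) : nat)%:R : R) = 0 by [].
  move: hA => /negbT; rewrite negb_or => /andP [/negbTE hA1 /negbTE hA2].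
  rewrite hA1 hA2 e0 addr0 in hX.
  case hB: (B0 i cd x).
    apply: le_trans (@Fv_le cd (stepcd R i cd x) (- y) _) _.
      have hC1 := B0_step R hB.
      have : C + 1 <= Sv (stepcd R i cd x).
        apply: le_trans (_ : _ <= #|geqs i (stepcd R i cd x).1|%:R) _.
          by rewrite hC1 -addn1 natrD.
        by rewrite /Sv le_max lexx.
      move=> hC2.
      have hC3 : (C + 1) ^+ 2 <= Sv (stepcd R i cd x) ^+ 2 by rewrite !expr2; nra.
      have : Kc * (C + 1) ^+ 2 <= Kc * Sv (stepcd R i cd x) ^+ 2 by apply: ler_wpM2l.
      have : lam * Xr R i (stepcd R i cd x) <= lam * Xr R i cd by apply: ler_wpM2l.
      rewrite hSv -hy.
      have : 0 <= Kc * 1 by rewrite mulr1.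
      rewrite !expr2; nra.
    rewrite /g hA1 hA2 hB e0.
    have e1 : (((true : bool) : nat)%:R : R) = 1 by [].
    rewrite e1 /E; apply: ler_wpM2l; first exact: Fv_ge0.
    lra.
  apply: le_trans (@Fv_le cd (stepcd R i cd x) 0 _) _.
    have : lam * Xr R i (stepcd R i cd x) <= lam * Xr R i cd by apply: ler_wpM2l.
    lra.
  rewrite /g hA1 hA2 hB e0 expR0; lra.
apply: le_trans (_ : _ <= \sum_(x : interaction n) iweight p x * (Fv cd * g x)) _.
  by apply: ler_sum => x _; rewrite ler_wpM2l ?iw0 // pw.
have e : \sum_(x : interaction n) iweight p x * (Fv cd * g x) =
   Fv cd * (\sum_(x : interaction n) iweight p x
     + eps * \sum_(x : interaction n) iweight p x * (A1 R i cd x : nat)%:R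
     + (eps + E) * \sum_(x : interaction n) iweight p x * (A2 i cd x : nat)%:R
     - E * \sum_(x : interaction n) iweight p x * (B0 i cd x : nat)%:R).
  transitivity (Fv cd * \sum_(x : interaction n) (iweight p x
     + eps * (iweight p x * (A1 R i cd x : nat)%:R)
     + (eps + E) * (iweight p x * (A2 i cd x : nat)%:R)
     - E * (iweight p x * (B0 i cd x : nat)%:R))).
    by rewrite mulr_sumr; apply: eq_bigr => x _; rewrite /g; ring.
  by rewrite sumrB !big_split /= -!mulr_sumr.
rewrite e sum_iw //.
apply: ler_piMr; first exact: Fv_ge0.
have hS1 := sum_A1 i p0 hp1 hn cd.
have hS2 := sum_A2 p hn hD.
have hS3 := sum_B0 i p cd.
have u0 := u_ge0 R hn.
have hk := key hp0 hp1 lam_lb lam_ub c0 c1 E0 Ey.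
have hnX : 2 * n%:R * Xr R i cd <= 2 * (alpha * C ^+ 2).
  rewrite -mulrA ler_wpM2l // [n%:R * _]mulrC -ler_pdivlMr //.
have Q : eps * p * C ^+ 2 + (eps + E) * (2 * (alpha * C ^+ 2)) - 2 * E * C * (n%:R - C) <= 0.
  have -> : eps * p * C ^+ 2 + (eps + E) * (2 * (alpha * C ^+ 2)) - 2 * E * C * (n%:R - C) =
    n%:R ^+ 2 * (1/50 * (p + 2 * (9/10 * p)) * c ^+ 2 - 2 * E * c * (1 - (1 + 9/10 * p) * c)).
    by rewrite hCn /eps /alpha; field.
  apply: mulr_ge0_le0; first by apply: exprn_ge0; apply: ltW.
  by rewrite subr_le0.
have t1 : eps * \sum_(x : interaction n) iweight p x * (A1 R i cd x : nat)%:R <= eps * (u R n * p * C ^+ 2).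
  by apply: ler_wpM2l => //; rewrite /eps.
have t2 : (eps + E) * \sum_(x : interaction n) iweight p x * (A2 i cd x : nat)%:R <= (eps + E) * (u R n * (2 * n%:R * Xr R i cd)).
  by apply: ler_wpM2l => //; rewrite /eps; lra.
have t3 : (eps + E) * (u R n * (2 * n%:R * Xr R i cd)) <= (eps + E) * (u R n * (2 * (alpha * C ^+ 2))).
  have eE : 0 <= eps + E by lra.
  exact: (ler_wpM2l eE (ler_wpM2l u0 hnX)).
have t4 : u R n * (eps * p * C ^+ 2 + (eps + E) * (2 * (alpha * C ^+ 2)) - 2 * E * C * (n%:R - C)) <= 0.
  exact: mulr_ge0_le0.
rewrite hS3.
have t5 : eps * (u R n * p * C ^+ 2) + (eps + E) * (u R n * (2 * (alpha * C ^+ 2))) - E * (u R n * (2 * C * (n%:R - C))) = u R n * (eps * p * C ^+ 2 + (eps + E) * (2 * (alpha * C ^+ 2)) - 2 * E * C * (n%:R - C)) by ring.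
lra.
Qed.



Lemma bad_G (cd : config n * {set 'I_n}) : BadS i p cd -> 1 <= Gv cd.
Proof.
move=> hB; have := bad_F hB; rewrite /Gv.
by move: hB; rewrite /BadS => /and3P [_ -> _].
Qed.

Lemma Gv_le_Fv (cd : config n * {set 'I_n}) : Gv cd <= Fv cd.
Proof. by rewrite /Gv; case: ifP => // _; exact: Fv_ge0. Qed.

Lemma Pr_le m (cd : config n * {set 'I_n}) : Inv R i cd -> Pr i p m cd <= Gv cd.
Proof.
have p0 := ltW hp0.
have iw0 := iw_ge0 p0 hp1 hn.
elim: m cd => [|m IH] cd hI.
  rewrite Pr0; case hB: (BadS i p cd); first exact: bad_G.
  exact: Gv_ge0.
rewrite PrS //; case hB: (BadS i p cd); first exact: bad_G.
apply: le_trans (_ : _ <= \sum_(x : interaction n) iweight p x * Gv (stepcd R i cd x)) _.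
  by apply: ler_sum => x _; rewrite ler_wpM2l ?iw0 // IH // Inv_step.
rewrite {2}/Gv; case: ifP => hc.
  apply: le_trans (drift hI (negbT hB) hc).
  by apply: ler_sum => x _; rewrite ler_wpM2l ?iw0 // Gv_le_Fv.
rewrite big1 // => x _.
rewrite /Gv; case: ifP => hc'; last by rewrite mulr0.
by move: hc; rewrite (le_trans (c_ge_mono R i cd x) hc').
Qed.


Lemma thr_eq : thr R n = expR (- (45%:R / 100%:R) * ln n%:R).
Proof. by rewrite /thr /powR gt_eqF ?n_gt0. Qed.

Lemma Mt2 : Mt ^+ 2 / n%:R = expR (ln n%:R / 10).
Proof.
have nn := n_gt0.
have eN : (n%:R : R) = expR (ln n%:R) by rewrite lnK // posrE.
have -> : Mt ^+ 2 / n%:R = thr R n ^+ 2 * n%:R.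
  rewrite /Mt; field; by rewrite gt_eqF.
rewrite thr_eq {2}eN -expRM_natl -expRD; congr expR.
by field.
Qed.

Lemma Prob_le T :
  Prob p (@bad R n p i T) <= expR (- (lam * alpha) * expR (ln n%:R / 10)).
Proof.
rewrite /Prob big_mkcond /=.
have -> : \sum_(w : T.-tuple (interaction n))
    (if bad p i w then \prod_(x <- w) iweight p x else 0) = Pr i p T (@init_config n, set0).
  apply: eq_bigr => w _; rewrite bad_EBk; case: EBk; by rewrite ?mulr1 ?mulr0.
have hI : Inv R i (@init_config n, set0).
  apply/andP; split; first exact: sub0set.
  apply/implyP => _; apply/subsetP => y; by rewrite inE.
apply: le_trans (Pr_le T hI) _; apply: le_trans (Gv_le_Fv _) _.
rewrite /Fv ler_expR.
have hX : Xr R i (@init_config n, set0) = 0.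
  by rewrite /Xr /= cards0 subr0.
rewrite hX mulr0 sub0r -Mt2 mulNr lerN2.
have hS : Mt <= Sv (@init_config n, set0) by rewrite /Sv le_max lexx orbT.
have M0 := Mt_ge0.
have hS2 : Mt ^+ 2 <= Sv (@init_config n, set0) ^+ 2 by rewrite !expr2; nra.
rewrite !expo_eq /Kc.
have -> : lam * alpha * (Mt ^+ 2 / n%:R) = lam * alpha / n%:R * Mt ^+ 2 by rewrite mulrA mulrAC.
by rewrite ler_wpM2l // Kc_ge0.
Qed.

End Main2.

Theorem mainTheorem1 (R : realType) (p : R) (hp0 : 0 < p) (hp1 : p <= 1) :
  forall K c : nat, exists N : nat, forall n : nat, (N <= n)%N ->
  forall i : nat,
    @Prob R n p (n ^ K.+1)%N (@bad R n p i (n ^ K.+1)%N) <= n%:R ^- c.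
Proof.
move=> K c.
pose kap : R := lam R * alpha p.
have kap0 : 0 < kap.
  rewrite /kap /alpha; apply: mulr_gt0; first by have := lam_lb R; lra.
  by apply: mulr_gt0; [lra | exact: hp0].
pose B : R := 200 * c%:R / kap.
have B0 : 0 <= B by rewrite /B; apply: divr_ge0; [apply: mulr_ge0; [lra | exact: ler0n] | exact: ltW].
exists (maxn 2 (Num.Def.archi_bound (expR B))).
move=> n hN i.
have hn : (1 < n)%N by apply: leq_trans hN; rewrite leq_maxl.
have nn : 0 < (n%:R : R) by rewrite ltr0n (ltn_trans _ hn).
apply: le_trans (Prob_le i hp0 hp1 hn _) _.
pose L := ln (n%:R : R).
have eN : (n%:R : R) = expR L by rewrite /L lnK // posrE.
have hL : B <= L.
  rewrite -ler_expR -eN.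
  apply: le_trans (ltW (archi_boundP (expR_ge0 B))) _.
  by rewrite ler_nat; apply: leq_trans hN; rewrite leq_maxr.
have L0 : 0 <= L by apply: le_trans hL.
have -> : (n%:R : R) ^- c = expR (- (c%:R * L)).
  by rewrite expRN expRM_natl -eN.
rewrite ler_expR -/L -/kap mulNr lerN2.
have h1 := @expR_ge1Dxn R (L / 10) 1 (divr_ge0 L0 (ler0n _ _)).
have f2 : (2`!%:R : R) = 2 by [].
rewrite f2 in h1.
have hB : 200 * c%:R <= kap * L.
  by move: hL; rewrite /B ler_pdivrMr // [L * _]mulrC.
have : kap * (1 + (L / 10) ^+ 2 / 2) <= kap * expR (L / 10) by rewrite ler_wpM2l // ltW.
have e : kap * (L / 10) ^+ 2 / 2 = (kap * L) * L / 200 by field.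
have : 200 * c%:R * L <= kap * L * L by rewrite ler_wpM2r.
have c0 : 0 <= (c%:R : R) by [].
nra.
Qed.
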